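(* Consider the two-dimensional map defined below and suppose there is no heterogeneity in speculative trading strategies, i.e. either $(w^F,w^C)=(1,0)$ or $(w^F,w^C)=(0,1)$. Then the map has a unique equilibrium (fixed point) $P_1=(\bar e_1,\Delta\bar y_1)$ given by $$\bar e_1=-\Omega\,\Delta\bar y,\qquad \Delta\bar y_1=\Delta y^{BP},$$ i.e. $P_1=(-\Omega\Delta y^{BP},\Delta y^{BP})$. If $w^F=1$ and $w^C=0$, then $P_1$ is locally stable. If $w^F=0$ and $w^C=1$, then $P_1$ is unstable.
   Context: The state variables are the (log) exchange rate $e_t$ and the output growth rate $\Delta y_t$, evolving according to the map $$e_t=e_{t-1}+(\mu+\rho)\left[w^F\left(-\Omega\Delta y_{t-1}-e_{t-1}\right)^3+w^C\left(e_{t-1}+\Omega\Delta y_{t-1}\right)\right],$$ $$\Delta y_t=\Delta y_{t-1}+w^{flex}\beta\left\{\Delta y^{BP}-\gamma\left[w^F\left(-\Omega\Delta y_{t-1}-e_{t-1}\right)^3+w^C\left(e_{t-1}+\Omega\Delta y_{t-1}\right)\right]-\Delta y_{t-1}\right\},$$ where $\mu>0$, $\rho>0$, $0<\beta<1$, $0<\Omega<1$, $0<w^{flex}<1$, $\Delta y^{BP}\in\mathbb{R}$ is a constant, $\gamma=\frac{(1-\theta)(\mu+\rho)}{\theta\pi}>0$ with $\theta\in(0,1)$, $\pi>0$, and $w^F,w^C\in[0,1]$ are the shares of fundamentalists and chartists with $w^F+w^C=1$. An equilibrium is a fixed point $(\bar e,\Delta\bar y)$ of this map; local stability refers to the fixed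 point of the map. *)

(* Defs.v *)
From Stdlib Require Import Reals.
Open Scope R_scope.

Definition gamma_of (theta pi_ mu rho : R) : R :=
  (1 - theta) * (mu + rho) / (theta * pi_).

Definition spec_term (wF wC Om e dy : R) : R :=
  wF * (- Om * dy - e) ^ 3 + wC * (e + Om * dy).

Definition fx_map (mu rho beta Om wflex dyBP gamma wF wC : R) (p : R * R) : R * R :=
  let e := fst p in
  let dy := snd p in
  (e + (mu + rho) * spec_term wF wC Om e dy,
   dy + wflex * beta * (dyBP - gamma * spec_term wF wC Om e dy - dy)).

Definition dist2 (p q : R * R) : R :=
  sqrt ((fst p - fst q) ^ 2 + (snd p - snd q) ^ 2).

Definition is_fixed_point (f : R * R -> R * R) (x : R * R) : Prop := f x = x.

Definition lyapunov_stable (f : R * R -> R * R) (x : R * R) : Prop :=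
  forall eps, 0 < eps -> exists delta, 0 < delta /\
    forall p, dist2 p x < delta -> forall n : nat, dist2 (Nat.iter n f p) x < eps.

Definition locally_attracting (f : R * R -> R * R) (x : R * R) : Prop :=
  exists delta, 0 < delta /\
    forall p, dist2 p x < delta -> Un_cv (fun n => dist2 (Nat.iter n f p) x) 0.

Definition locally_stable (f : R * R -> R * R) (x : R * R) : Prop :=
  is_fixed_point f x /\ lyapunov_stable f x /\ locally_attracting f x.

Definition unstable (f : R * R -> R * R) (x : R * R) : Prop :=
  is_fixed_point f x /\ ~ lyapunov_stable f x.

(* Main.v *)
Require Import Defs.
From Stdlib Require Import Reals Lra Psatz.
Open Scope R_scope.

Lemma dist_le (p q : R * R) : dist2 p q <= Rabs (fst p - fst q) + Rabs (snd p - snd q).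
Proof.
  unfold dist2.
  rewrite <- (sqrt_pow2 (Rabs (fst p - fst q) + Rabs (snd p - snd q))) by
    (pose proof (Rabs_pos (fst p - fst q)); pose proof (Rabs_pos (snd p - snd q)); lra).
  apply sqrt_le_1_alt.
  rewrite <- (pow2_abs (fst p - fst q)) at 1. rewrite <- (pow2_abs (snd p - snd q)) at 1.
  pose proof (Rabs_pos (fst p - fst q)); pose proof (Rabs_pos (snd p - snd q)); nra.
Qed.

Lemma dist_ge1 (p q : R * R) : Rabs (fst p - fst q) <= dist2 p q.
Proof.
  unfold dist2. rewrite <- sqrt_Rsqr_abs. apply sqrt_le_1_alt. unfold Rsqr.
  pose proof (pow2_ge_0 (snd p - snd q)). nra.
Qed.

Lemma dist_ge2 (p q : R * R) : Rabs (snd p - snd q) <= dist2 p q.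
Proof.
  unfold dist2. rewrite <- sqrt_Rsqr_abs. apply sqrt_le_1_alt. unfold Rsqr.
  pose proof (pow2_ge_0 (fst p - fst q)). nra.
Qed.

Lemma dist_ge0 (p q : R * R) : 0 <= dist2 p q.
Proof. unfold dist2; apply sqrt_pos. Qed.

Lemma bernoulli (h : R) (n : nat) : 0 <= h -> 1 + INR n * h <= (1 + h) ^ n.
Proof.
  intro Hh. induction n as [|n IH].
  - simpl; lra.
  - rewrite S_INR. simpl.
    assert (0 <= INR n) by apply pos_INR. nra.
Qed.

Lemma descent {T : Type} (h : T -> T) (W : T -> R) (rho kap : R) :
  0 < kap ->
  (forall p, 0 <= W p) ->
  (forall p, W p <= rho -> W (h p) <= W p - kap * W p ^ 3) ->
  forall p, W p <= rho ->
  (forall n, W (Nat.iter n h p) <= W p) /\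
  (forall eps, 0 < eps -> exists N, forall n, (N <= n)%nat -> W (Nat.iter n h p) < eps).
Proof.
  intros Hk H0 Hs p Hp.
  assert (Hstep : forall q, W q <= rho -> W (h q) <= W q).
  { intros q Hq. specialize (Hs q Hq). pose proof (H0 q).
    assert (0 <= W q ^ 3) by (apply pow_le; auto). nra. }
  assert (Hmono : forall n, W (Nat.iter n h p) <= W p).
  { induction n as [|n IH]; simpl. lra.
    apply Rle_trans with (W (Nat.iter n h p)); auto. apply Hstep. lra. }
  split; auto.
  assert (Hmono2 : forall m j, W (Nat.iter (j + m) h p) <= W (Nat.iter m h p)).
  { intros m j; induction j as [|j IH]; simpl. lra.
    apply Rle_trans with (W (Nat.iter (j + m) h p)); auto. apply Hstep.
    specialize (Hmono (j+m)%nat). lra. }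
  intros eps He.
  assert (Hclaim : forall n, W (Nat.iter n h p) < eps \/
            W (Nat.iter n h p) <= W p - INR n * (kap * eps ^ 3)).
  { induction n as [|n IH].
    - right; simpl; lra.
    - destruct IH as [IH|IH].
      + left. simpl. apply Rle_lt_trans with (W (Nat.iter n h p)); auto.
        apply Hstep. specialize (Hmono n). lra.
      + destruct (Rlt_le_dec (W (Nat.iter n h p)) eps) as [Hl|Hl].
        * left. simpl. apply Rle_lt_trans with (W (Nat.iter n h p)); auto.
          apply Hstep. specialize (Hmono n). lra.
        * right. rewrite S_INR. simpl.
          assert (eps ^ 3 <= W (Nat.iter n h p) ^ 3) by (apply pow_incr; lra).
          specialize (Hs (Nat.iter n h p)). specialize (Hmono n).
          assert (W (h (Nat.iter n h p)) <= W (Nat.iter n h p) - kap * W (Nat.iter n h p) ^ 3) by (apply Hs; lra).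
          nra. }
  assert (Hke : 0 < kap * eps ^ 3) by (apply Rmult_lt_0_compat; auto; apply pow_lt; auto).
  destruct (INR_unbounded (W p / (kap * eps ^ 3))) as [N HN].
  exists N. intros n Hn.
  assert (HN' : W (Nat.iter N h p) < eps).
  { destruct (Hclaim N) as [H|H]; auto.
    exfalso. pose proof (H0 (Nat.iter N h p)).
    assert (INR N * (kap * eps ^ 3) > W p).
    { apply Rmult_gt_compat_r with (r := kap * eps ^ 3) in HN; auto.
      unfold Rdiv in HN. rewrite Rmult_assoc, Rinv_l in HN; lra. }
    lra. }
  replace n with ((n - N) + N)%nat by lia.
  eapply Rle_lt_trans; [apply Hmono2|exact HN'].
Qed.
Lemma cube_conv (p q : R) : 0 <= p -> 0 <= q -> (p + q) ^ 3 <= 4 * (p ^ 3 + q ^ 3).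
Proof. intros. assert (0 <= 3 * (p + q) * (p - q) ^ 2) by (apply Rmult_le_pos; [lra| apply pow2_ge_0]). nra. Qed.

Lemma D_bound (k c Om a A X B kap : R) :
  0 < k -> 0 < c -> 0 < Om -> 0 < a -> 0 < kap ->
  kap <= k / 32 -> kap * (8 * a ^ 2) <= c -> kap * (2 * (2 * Om + a) ^ 3) <= a * c ->
  0 <= A -> 0 <= X -> A <= 1 -> X <= 1 -> 0 <= B -> A - Om * X <= B ->
  kap * (A + a * X) ^ 3 <= k / 2 * B ^ 2 * A + a * c / 2 * X.
Proof.
  intros Hk Hc HOm Ha Hkap H1 H2 H3 HA HX HA1 HX1 HB HAB.
  destruct (Rle_lt_dec (Om * X) (A / 2)) as [Hc1|Hc1].
  - assert (HB2 : A ^ 2 / 4 <= B ^ 2) by nra.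
    assert (Hc3 := cube_conv A (a * X) HA ltac:(nra)).
    assert (HX3 : X ^ 3 <= X) by nra.
    assert (Ha3 : (a * X) ^ 3 <= a ^ 3 * X).
    { replace ((a * X) ^ 3) with (a ^ 3 * X ^ 3) by ring.
      apply Rmult_le_compat_l; [apply pow_le; lra | lra]. }
    assert (kap * (A + a * X) ^ 3 <= kap * (4 * A ^ 3) + kap * (4 * a ^ 3 * X)) by nra.
    assert (kap * (4 * A ^ 3) <= k / 8 * A ^ 3) by (assert (0 <= A ^ 3) by (apply pow_le; lra); nra).
    assert (kap * (4 * a ^ 3 * X) <= a * c / 2 * X).
    { replace (kap * (4 * a ^ 3 * X)) with ((kap * (8 * a ^ 2)) * (a * X / 2)) by field.
      replace (a * c / 2 * X) with (c * (a * X / 2)) by field.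
      apply Rmult_le_compat_r; nra. }
    assert (0 <= (k / 2 * A) * (B ^ 2 - A ^ 2 / 4)) by (apply Rmult_le_pos; [apply Rmult_le_pos; lra| lra]).
    assert (k / 8 * A ^ 3 <= k / 2 * B ^ 2 * A) by nra.
    lra.
  - assert (HW : A + a * X <= (2 * Om + a) * X) by lra.
    assert (HW3 : (A + a * X) ^ 3 <= ((2 * Om + a) * X) ^ 3) by (assert (0 <= a * X) by (apply Rmult_le_pos; lra); apply pow_incr; lra).
    assert (HX3 : X ^ 3 <= X) by nra.
    replace (((2 * Om + a) * X) ^ 3) with ((2 * Om + a) ^ 3 * X ^ 3) in HW3 by ring.
    assert (0 <= (2 * Om + a) ^ 3) by (apply pow_le; lra).
    assert ((2 * Om + a) ^ 3 * X ^ 3 <= (2 * Om + a) ^ 3 * X) by (apply Rmult_le_compat_l; lra).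
    assert (kap * (A + a * X) ^ 3 <= kap * ((2 * Om + a) ^ 3 * X)) by (apply Rmult_le_compat_l; lra).
    assert (kap * ((2 * Om + a) ^ 3 * X) <= a * c / 2 * X).
    { replace (kap * ((2 * Om + a) ^ 3 * X)) with ((kap * (2 * (2 * Om + a) ^ 3)) * (X / 2)) by field.
      replace (a * c / 2 * X) with ((a * c) * (X / 2)) by field.
      apply Rmult_le_compat_r; lra. }
    assert (0 <= k / 2 * B ^ 2 * A) by (assert (0 <= B ^ 2) by nra; apply Rmult_le_pos; [apply Rmult_le_pos|]; lra).
    lra.
Qed.

Lemma step_ineq (k c g Om r a kap v x : R) :
  0 < k -> 0 < c -> c < 1 -> 0 < g -> 0 < Om -> Om < 1 -> 0 < r -> r <= 1 ->
  4 * r ^ 2 * k <= 1 -> 24 * r ^ 2 * g * Om <= 1 ->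
  0 < a -> 2 * a * c * g = k -> 0 < kap ->
  kap <= k / 32 -> kap * (8 * a ^ 2) <= c -> kap * (2 * (2 * Om + a) ^ 3) <= a * c ->
  Rabs v <= r -> Rabs x <= r ->
  Rabs (v - k * (v + Om * x) ^ 3) + a * Rabs ((1 - c) * x + c * g * (v + Om * x) ^ 3)
  <= (Rabs v + a * Rabs x) - kap * (Rabs v + a * Rabs x) ^ 3.
Proof.
  intros Hk Hc Hc1 Hg HOm HOm1 Hr Hr1 Hr2 Hr3 Ha Hadef Hkap Hk1 Hk2 Hk3 Hv Hx.
  set (u := v + Om * x).
  set (A := Rabs v). set (X := Rabs x). set (B := Rabs u).
  assert (HA : 0 <= A) by apply Rabs_pos.
  assert (HAr : A <= r) by (unfold A; lra). assert (HXr : X <= r) by (unfold X; lra).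
  assert (HX : 0 <= X) by apply Rabs_pos.
  assert (HB : 0 <= B) by apply Rabs_pos.
  assert (HBup : B <= A + Om * X).
  { unfold B, u, A, X. eapply Rle_trans; [apply Rabs_triang|].
    rewrite Rabs_mult, (Rabs_right Om) by lra. lra. }
  assert (HBlo : A - Om * X <= B).
  { unfold B, u, A, X.
    pose proof (Rabs_triang (v + Om * x) (- (Om * x))).
    rewrite Rabs_Ropp, Rabs_mult, (Rabs_right Om) in H by lra.
    replace (v + Om * x + - (Om * x)) with v in H by ring. lra. }
  assert (Hu2 : u ^ 2 = B ^ 2) by (unfold B; rewrite pow2_abs; auto).
  assert (Om * X <= 1 * r) by (apply Rmult_le_compat; lra).
  assert (HB2r : B <= 2 * r) by lra.
  assert (HB2 : B ^ 2 <= 4 * r ^ 2) by nra.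
  set (s := k * u ^ 2).
  assert (Hs0 : 0 <= s) by (unfold s; rewrite Hu2; nra).
  assert (Hs1 : s <= 1) by (unfold s; rewrite Hu2; nra).
  assert (E1 : v - k * u ^ 3 = (1 - s) * v - s * Om * x) by (unfold s, u; ring).
  assert (H1 : Rabs (v - k * u ^ 3) <= (1 - s) * A + s * Om * X).
  { rewrite E1. unfold Rminus at 1. eapply Rle_trans; [apply Rabs_triang|].
    rewrite Rabs_Ropp, !Rabs_mult, (Rabs_right (1 - s)), (Rabs_right s), (Rabs_right Om) by lra.
    fold A X. lra. }
  assert (H2 : Rabs ((1 - c) * x + c * g * u ^ 3) <= (1 - c) * X + c * g * B ^ 2 * (A + Om * X)).
  { eapply Rle_trans; [apply Rabs_triang|].
    rewrite !Rabs_mult, (Rabs_right (1 - c)), (Rabs_right c), (Rabs_right g) by lra.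
    replace (u ^ 3) with (u ^ 2 * u) by ring. rewrite Rabs_mult, Hu2.
    rewrite (Rabs_right (B ^ 2)) by nra. fold X B.
    assert (0 <= c * g * B ^ 2) by (apply Rmult_le_pos; [nra| nra]).
    nra. }
  assert (Hs : s = k * B ^ 2) by (unfold s; rewrite Hu2; auto).
  assert (HD := D_bound k c Om a A X B kap Hk Hc HOm Ha Hkap Hk1 Hk2 Hk3 HA HX
                 ltac:(lra) ltac:(lra) HB HBlo).
  assert (Hac : a * c * g = k / 2) by lra.
  assert (Hsmall : 3 * k * Om * B ^ 2 <= a * c).
  { assert (H12 : 12 * k * Om * r ^ 2 * (2 * g) <= a * c * (2 * g)).
    { replace (12 * k * Om * r ^ 2 * (2 * g)) with (k * (24 * r ^ 2 * g * Om)) by ring.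
      replace (a * c * (2 * g)) with (k * 1) by lra.
      apply Rmult_le_compat_l; lra. }
    apply Rmult_le_reg_r in H12; [|lra].
    assert (0 <= k * Om) by (apply Rmult_le_pos; lra).
    assert (k * Om * B ^ 2 <= k * Om * (4 * r ^ 2)) by (apply Rmult_le_compat_l; lra).
    lra. }
  assert (Ha0 : 0 <= a * (c * g * B ^ 2 * (A + Om * X))) by
    (apply Rmult_le_pos; [lra|]; apply Rmult_le_pos; [apply Rmult_le_pos; nra|nra]).
  apply Rle_trans with ((1 - s) * A + s * Om * X + a * ((1 - c) * X + c * g * B ^ 2 * (A + Om * X))).
  { apply Rplus_le_compat; [exact H1|]. apply Rmult_le_compat_l; lra. }
  rewrite Hs.
  replace ((1 - k * B ^ 2) * A + k * B ^ 2 * Om * X + a * ((1 - c) * X + c * g * B ^ 2 * (A + Om * X)))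
    with (A + a * X - (k * B ^ 2 * A - (a * c * g) * B ^ 2 * A) - X * (a * c - k * B ^ 2 * Om - (a * c * g) * B ^ 2 * Om)) by ring.
  rewrite Hac. nra.
Qed.

Lemma abs_bounds (v d : R) : Rabs v <= d -> - d <= v <= d.
Proof. intro H. pose proof (Rle_abs v). pose proof (Rle_abs (- v)). rewrite Rabs_Ropp in H1. lra. Qed.

Lemma psi_bound (al be ga v x d : R) : 0 <= al -> 0 <= be -> 0 <= ga ->
  Rabs v <= d -> Rabs x <= d -> Rabs (al * (v + be * x) - ga * x) <= (al * (1 + be) + ga) * d.
Proof.
  intros Ha Hb Hg Hv Hx. apply abs_bounds in Hv. apply abs_bounds in Hx.
  apply Rabs_le. split.
  - assert (al * v >= al * (-d)) by (apply Rle_ge, Rmult_le_compat_l; lra).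
    assert (al * be * x >= al * be * (-d)) by (apply Rle_ge, Rmult_le_compat_l; [apply Rmult_le_pos|]; lra).
    assert (ga * x <= ga * d) by (apply Rmult_le_compat_l; lra).
    nra.
  - assert (al * v <= al * d) by (apply Rmult_le_compat_l; lra).
    assert (al * be * x <= al * be * d) by (apply Rmult_le_compat_l; [apply Rmult_le_pos|]; lra).
    assert (ga * x >= ga * (-d)) by (apply Rle_ge, Rmult_le_compat_l; lra).
    nra.
Qed.

Theorem proposition1
  (mu rho beta Om wflex dyBP theta pi_ wF wC : R)
  (Hmu : 0 < mu) (Hrho : 0 < rho)
  (Hbeta0 : 0 < beta) (Hbeta1 : beta < 1)
  (HOm0 : 0 < Om) (HOm1 : Om < 1)
  (Hw0 : 0 < wflex) (Hw1 : wflex < 1)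
  (Htheta0 : 0 < theta) (Htheta1 : theta < 1) (Hpi : 0 < pi_)
  (Hhom : (wF = 1 /\ wC = 0) \/ (wF = 0 /\ wC = 1)) :
  let f := fx_map mu rho beta Om wflex dyBP (gamma_of theta pi_ mu rho) wF wC in
  let P1 := (- Om * dyBP, dyBP) in
  (forall p : R * R, is_fixed_point f p <-> p = P1) /\
  (wF = 1 /\ wC = 0 -> locally_stable f P1) /\
  (wF = 0 /\ wC = 1 -> unstable f P1).
Proof.
  assert (Hk : 0 < mu + rho) by lra.
  assert (Hc : 0 < wflex * beta) by (apply Rmult_lt_0_compat; lra).
  assert (Hc1 : wflex * beta < 1) by nra.
  assert (Hg : 0 < gamma_of theta pi_ mu rho).
  { unfold gamma_of. apply Rmult_lt_0_compat.
    apply Rmult_lt_0_compat; lra. apply Rinv_0_lt_compat, Rmult_lt_0_compat; lra. }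
  set (k := mu + rho) in *. set (c := wflex * beta) in *.
  set (g := gamma_of theta pi_ mu rho) in *.
  intros f P1.
  assert (Hfix : forall p : R * R, is_fixed_point f p <-> p = P1).
  { intros [e dy]. unfold is_fixed_point, f, fx_map, P1. simpl. split.
    - intro H. injection H as H1 H2.
      assert (Hs : spec_term wF wC Om e dy = 0).
      { fold k in H1. assert (k * spec_term wF wC Om e dy = 0) by lra.
        apply Rmult_integral in H. destruct H; [lra|auto]. }
      rewrite Hs in H2.
      assert (Hdy : dy = dyBP).
      { assert (wflex * beta * (dyBP - g * 0 - dy) = 0) by lra.
        apply Rmult_integral in H. destruct H as [H|H]; [fold c in H; lra|lra]. }
      subst dy. f_equal.
      unfold spec_term in Hs. destruct Hhom as [[-> ->]|[-> ->]].
      + assert (H0 : (- Om * dyBP - e) ^ 3 = 0) by lra.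
        destruct (Req_dec (- Om * dyBP - e) 0) as [Hz|Hz]; [lra|]. exfalso; exact (pow_nonzero _ 3 Hz H0).
      + lra.
    - intro H. injection H as -> ->. unfold spec_term.
      destruct Hhom as [[-> ->]|[-> ->]]; f_equal; ring. }
  split; [exact Hfix|]. split.
  -
    intros [HF HC]. subst wF wC.
    split; [apply Hfix; auto|].
    set (a := k / (2 * c * g)).
    assert (Ha : 0 < a) by (unfold a; apply Rmult_lt_0_compat; [lra|apply Rinv_0_lt_compat; nra]).
    assert (Hadef : 2 * a * c * g = k) by (unfold a; field; lra).
    set (t := 1 + 2 * k + 6 * g * Om).
    assert (Ht : 1 <= t) by (unfold t; nra).
    set (r := 1 / t).
    assert (Hrt : r * t = 1) by (unfold r; field; lra).
    assert (Hr : 0 < r) by (unfold r; apply Rdiv_lt_0_compat; lra).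
    assert (Hr1 : r <= 1) by nra.
    assert (Hr2 : 4 * r ^ 2 * k <= 1).
    { assert (1 + 2 * k <= t) by (unfold t; nra).
      assert (4 * k <= t ^ 2) by nra.
      assert (Hq : r ^ 2 * (4 * k) <= r ^ 2 * t ^ 2) by (apply Rmult_le_compat_l; nra).
      replace (r ^ 2 * t ^ 2) with ((r * t) ^ 2) in Hq by ring. rewrite Hrt in Hq. lra. }
    assert (Hr3 : 24 * r ^ 2 * g * Om <= 1).
    { assert (24 * g * Om <= t ^ 2).
      { unfold t. assert (0 <= g * Om) by nra. assert (0 <= (1 - 6 * g * Om) ^ 2) by apply pow2_ge_0. nra. }
      assert (Hq : r ^ 2 * (24 * g * Om) <= r ^ 2 * t ^ 2) by (apply Rmult_le_compat_l; nra).
      replace (r ^ 2 * t ^ 2) with ((r * t) ^ 2) in Hq by ring. rewrite Hrt in Hq. lra. }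
    set (kap := Rmin (k / 32) (Rmin (c / (8 * a ^ 2)) (a * c / (2 * (2 * Om + a) ^ 3)))).
    assert (Ha2 : 0 < 8 * a ^ 2) by nra.
    assert (Ha3 : 0 < 2 * (2 * Om + a) ^ 3) by (assert (0 < (2 * Om + a) ^ 3) by (apply pow_lt; lra); lra).
    assert (Hkap : 0 < kap).
    { unfold kap. repeat apply Rmin_glb_lt; try apply Rdiv_lt_0_compat; try lra.
      apply Rmult_lt_0_compat; lra. }
    assert (Hk1 : kap <= k / 32) by apply Rmin_l.
    assert (Hk2 : kap * (8 * a ^ 2) <= c).
    { assert (kap <= c / (8 * a ^ 2)) by (eapply Rle_trans; [apply Rmin_r|apply Rmin_l]).
      apply Rmult_le_compat_r with (r := 8 * a ^ 2) in H; [|lra].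
      replace (c / (8 * a ^ 2) * (8 * a ^ 2)) with c in H by (field; lra). lra. }
    assert (Hk3 : kap * (2 * (2 * Om + a) ^ 3) <= a * c).
    { assert (kap <= a * c / (2 * (2 * Om + a) ^ 3)) by (eapply Rle_trans; [apply Rmin_r|apply Rmin_r]).
      apply Rmult_le_compat_r with (r := 2 * (2 * Om + a) ^ 3) in H; [|lra].
      replace (a * c / (2 * (2 * Om + a) ^ 3) * (2 * (2 * Om + a) ^ 3)) with (a * c) in H by (field; lra). lra. }
    set (rho0 := r * Rmin 1 a).
    assert (Hrho0 : 0 < rho0) by (unfold rho0; apply Rmult_lt_0_compat; [lra|apply Rmin_glb_lt; lra]).
    assert (Hrho0r : rho0 <= r) by (unfold rho0; assert (Rmin 1 a <= 1) by apply Rmin_l; nra).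
    assert (Hrho0a : rho0 <= a * r) by (unfold rho0; assert (Rmin 1 a <= a) by apply Rmin_r; nra).
    set (W := fun q : R * R => Rabs (fst q - fst P1) + a * Rabs (snd q - snd P1)).
    assert (HW0 : forall q, 0 <= W q).
    { intro q. unfold W. pose proof (Rabs_pos (fst q - fst P1)). pose proof (Rabs_pos (snd q - snd P1)). nra. }
    assert (Hstep : forall q, W q <= rho0 -> W (f q) <= W q - kap * W q ^ 3).
    { intros [e dy] Hq. unfold W in *. simpl in *.
      assert (E1 : e + k * spec_term 1 0 Om e dy - - Om * dyBP =
                   (e - - Om * dyBP) - k * ((e - - Om * dyBP) + Om * (dy - dyBP)) ^ 3)
        by (unfold spec_term; ring).
      assert (E2 : dy + wflex * beta * (dyBP - g * spec_term 1 0 Om e dy - dy) - dyBP =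
                   (1 - c) * (dy - dyBP) + c * g * ((e - - Om * dyBP) + Om * (dy - dyBP)) ^ 3)
        by (unfold spec_term, c; ring).
      unfold f, fx_map. simpl. fold k. rewrite E1, E2.
      pose proof (Rabs_pos (e - - Om * dyBP)). pose proof (Rabs_pos (dy - dyBP)).
      assert (0 <= a * Rabs (dy - dyBP)) by (apply Rmult_le_pos; lra).
      apply (step_ineq k c g Om r a kap); try lra.
      assert (Hx : a * Rabs (dy - dyBP) <= a * r) by lra.
      apply Rmult_le_reg_l in Hx; lra. }
    assert (HWd : forall q, W q <= (1 + a) * dist2 q P1).
    { intro q. unfold W. pose proof (dist_ge1 q P1). pose proof (dist_ge2 q P1). nra. }
    assert (HdW : forall q, dist2 q P1 <= (1 + / a) * W q).
    { intro q. unfold W. pose proof (dist_le q P1).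
      assert (Rabs (snd q - snd P1) = / a * (a * Rabs (snd q - snd P1))) by (field; lra).
      pose proof (Rabs_pos (fst q - fst P1)). pose proof (Rabs_pos (snd q - snd P1)).
      assert (0 < / a) by (apply Rinv_0_lt_compat; lra).
      assert (/ a * Rabs (fst q - fst P1) >= 0) by nra.
      nra. }
    assert (Hia : 0 < / a) by (apply Rinv_0_lt_compat; lra).
    split.
    + intros eps Heps.
      set (C := (1 + a) * (1 + / a)).
      assert (HC : 0 < C) by (unfold C; nra).
      exists (Rmin (rho0 / (1 + a)) (eps / C)). split.
      { apply Rmin_glb_lt; apply Rdiv_lt_0_compat; lra. }
      intros p Hp n.
      assert (Hd1 : dist2 p P1 < rho0 / (1 + a)) by (eapply Rlt_le_trans; [exact Hp|apply Rmin_l]).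
      assert (Hd2 : dist2 p P1 < eps / C) by (eapply Rlt_le_trans; [exact Hp|apply Rmin_r]).
      assert (HWp : W p <= rho0).
      { apply Rle_trans with ((1 + a) * dist2 p P1); auto.
        apply Rmult_lt_compat_l with (r := 1 + a) in Hd1; [|lra].
        replace ((1 + a) * (rho0 / (1 + a))) with rho0 in Hd1 by (field; lra). lra. }
      destruct (descent f W rho0 kap Hkap HW0 Hstep p HWp) as [Hm _].
      apply Rle_lt_trans with ((1 + / a) * W (Nat.iter n f p)); auto.
      apply Rle_lt_trans with ((1 + / a) * ((1 + a) * dist2 p P1)).
      { apply Rmult_le_compat_l; [lra|]. eapply Rle_trans; [apply Hm|apply HWd]. }
      apply Rmult_lt_compat_l with (r := C) in Hd2; auto.
      replace (C * (eps / C)) with eps in Hd2 by (field; lra).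
      unfold C in Hd2. nra.
    + exists (rho0 / (1 + a)). split; [apply Rdiv_lt_0_compat; lra|].
      intros p Hp.
      assert (HWp : W p <= rho0).
      { apply Rle_trans with ((1 + a) * dist2 p P1); auto.
        apply Rmult_lt_compat_l with (r := 1 + a) in Hp; [|lra].
        replace ((1 + a) * (rho0 / (1 + a))) with rho0 in Hp by (field; lra). lra. }
      destruct (descent f W rho0 kap Hkap HW0 Hstep p HWp) as [_ Hcv].
      intros eps Heps.
      destruct (Hcv (eps / (1 + / a))) as [N HN]; [apply Rdiv_lt_0_compat; lra|].
      exists N. intros n Hn. unfold R_dist. rewrite Rminus_0_r.
      rewrite Rabs_right by (apply Rle_ge, dist_ge0).
      specialize (HN n ltac:(lia)).
      apply Rle_lt_trans with ((1 + / a) * W (Nat.iter n f p)); auto.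
      apply Rmult_lt_compat_l with (r := 1 + / a) in HN; [|lra].
      replace ((1 + / a) * (eps / (1 + / a))) with eps in HN by (field; lra). lra.
  -
    intros [HF HC]. subst wF wC.
    split; [apply Hfix; auto|].
    set (a0 := 1 + k - Om * c * g).
    set (T := a0 + 1 - c).
    set (D := a0 * (1 - c) - Om * c ^ 2 * g).
    set (Dl := T * T - 4 * D).
    assert (HDl : Dl - (T - 2) ^ 2 = 4 * k * c) by (unfold Dl, D, T, a0; ring).
    assert (HDl0 : 0 < Dl) by (assert (0 <= (T - 2) ^ 2) by apply pow2_ge_0; nra).
    set (s := sqrt Dl).
    assert (Hss : s * s = Dl) by (apply sqrt_sqrt; lra).
    assert (Hs0 : 0 <= s) by apply sqrt_pos.
    assert (Hs2 : 2 - T < s) by nra.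
    set (lam := (T + s) / 2).
    assert (Hlam : 1 < lam) by (unfold lam; lra).
    assert (Hpol : lam * lam - T * lam + D = 0).
    { unfold lam. replace ((T + s) / 2 * ((T + s) / 2) - T * ((T + s) / 2) + D)
        with ((s * s - T * T) / 4 + D) by field. rewrite Hss. unfold Dl. field. }
    set (psi := fun q : R * R => (lam - 1 + c) * ((fst q - fst P1) + Om * (snd q - snd P1))
                                 - Om * c * (snd q - snd P1)).
    assert (Hpsi : forall q, psi (f q) = lam * psi q).
    { intros [e dy]. unfold psi, f, fx_map, P1. simpl.
      assert (E : (lam - 1 + c) * (e + k * spec_term 0 1 Om e dy - - Om * dyBP +
           Om * (dy + wflex * beta * (dyBP - g * spec_term 0 1 Om e dy - dy) - dyBP)) -
           Om * c * (dy + wflex * beta * (dyBP - g * spec_term 0 1 Om e dy - dy) - dyBP) -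
           lam * ((lam - 1 + c) * (e - - Om * dyBP + Om * (dy - dyBP)) - Om * c * (dy - dyBP))
           = - (lam * lam - T * lam + D) * (e - - Om * dyBP + Om * (dy - dyBP)))
        by (unfold spec_term, T, D, a0, c; ring).
      rewrite Hpol in E. fold k. lra. }
    intro Hst. destruct (Hst 1 Rlt_0_1) as [delta [Hd Hp]].
    set (p0 := (fst P1 + delta / 2, snd P1)).
    assert (Hp0 : dist2 p0 P1 < delta).
    { eapply Rle_lt_trans; [apply dist_le|]. unfold p0; simpl.
      replace (- Om * dyBP + delta / 2 - - Om * dyBP) with (delta / 2) by ring.
      replace (dyBP - dyBP) with 0 by ring. rewrite Rabs_R0, Rabs_right by lra. lra. }
    specialize (Hp p0 Hp0).
    assert (Hit : forall n, psi (Nat.iter n f p0) = lam ^ n * psi p0).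
    { induction n as [|n IH]; simpl. ring. rewrite Hpsi, IH. ring. }
    assert (Hpsi0 : psi p0 = (lam - 1 + c) * (delta / 2)) by (unfold psi, p0; simpl; ring).
    set (M := (lam - 1 + c) * (1 + Om) + Om * c).
    assert (Hbd : forall q, Rabs (psi q) <= M * dist2 q P1).
    { intro q. unfold psi, M. apply psi_bound; [lra|lra|apply Rmult_le_pos; lra|apply dist_ge1|apply dist_ge2]. }
    set (K := (lam - 1 + c) * (delta / 2)).
    assert (HK : 0 < K) by (unfold K; apply Rmult_lt_0_compat; lra).
    assert (HM : 0 < M) by (unfold M; nra).
    destruct (INR_unbounded (M / ((lam - 1) * K))) as [n Hn].
    assert (H1 : lam ^ n * K < M).
    { pose proof (Hbd (Nat.iter n f p0)). rewrite Hit, Hpsi0 in H. fold K in H.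
      rewrite Rabs_right in H.
      - specialize (Hp n). nra.
      - apply Rle_ge, Rmult_le_pos; [apply pow_le; lra|lra]. }
    pose proof (bernoulli (lam - 1) n ltac:(lra)).
    replace (1 + (lam - 1)) with lam in H by ring.
    assert (Hlk : 0 < (lam - 1) * K) by (apply Rmult_lt_0_compat; lra).
    apply Rmult_gt_compat_r with (r := (lam - 1) * K) in Hn; [|lra].
    replace (M / ((lam - 1) * K) * ((lam - 1) * K)) with M in Hn by (field; lra).
    nra.
Qed.
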